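(* Let $N\ge 4$ and let $l,r$ be positive integers with $2\le l+r\le N-2$. Let $\hat O\in V_{\mathcal N}$ be $(l,r)$-invertible. Let $\hat X_i\in V_{\{i\}}$ for $i=1,\dots,N$ be arbitrary. Define operators $\hat Y_k\in V_{\{k+1,\dots,k+r\}}$, $k=N-r,N-r-1,\dots,l$, recursively by $\hat Y_{N-r}=\hat X_{N-r+1}\cdots\hat X_N$ and $$\hat Y_{k-1}=\bar E_{\{k-l,\dots,k-1\}}^{\{k,\dots,k+r-1\}}\Bigl(E_{\{k-l,\dots,k-1\}}^{\{k,\dots,k+r\}}(\hat X_k\hat Y_k)\Bigr),\qquad k=N-r,N-r-1,\dots,l+1,$$ where $\bar E$ denotes the Moore–Penrose pseudoinverse of the linear map $E$. Then $$\mathrm{tr}\bigl[\hat X_1\cdots\hat X_N\,\hat O\bigr]=\mathrm{tr}\bigl[\hat X_1\cdots\hat X_l\,\hat Y_l\,\hat O\bigr].$$ In particular (taking the $\hat X_i$ to run over basis operators $\hat P_i^{(\alpha_i)}$), an $(l,r)$-invertible $\hat O$ is completely determined by its reductions $\mathrm{tr}_{\mathcal N\setminus\{k,\dots,k+R-1\}}[\hat O]$, $k=1,\dots,N-R+1$, to all blocks of $R=l+r+1$ contiguous sites.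
   Context: Consider $N$ sites $\mathcal N=\{1,\dots,N\}$, each carrying $\mathbb C^d$; the total Hilbert space is $(\mathbb C^d)^{\otimes N}$. For each site $i$ let $\{\hat P_i^{(\alpha)}\}_{\alpha=1,\dots,d^2}$ be a basis of the operators on site $i$, orthonormal with respect to the Hilbert–Schmidt inner product $\langle A,B\rangle=\mathrm{tr}[A^\dagger B]$. For $\mathcal I\subset\mathcal N$, $V_{\mathcal I}$ is the complex vector space spanned by the products $\prod_{i\in\mathcal I}\hat P_i^{(\alpha_i)}$ (i.e. the operators acting on the sites in $\mathcal I$), equipped with the Hilbert–Schmidt inner product; an operator in $V_{\mathcal I}$ is identified with its tensor product with the identity on the remaining sites, and products of operators on disjoint site sets are tensor products. $\mathrm{tr}_{\mathcal S}$ denotes the partial trace over the sites in $\mathcal S$. For fixed $\hat O\in V_{\mathcal N}$ and $\mathcal I,\mathcal J\subset\mathcal N$ (with $\mathcal I\cup\mathcal J$ a contiguous set of sites and $\mathcal I\cap\mathcal J=\emptyset$), the linear map $E_{\mathcal I}^{\mathcal J}:V_{\mathcal J}\to V_{\mathcal I}$ is $E_{\mathcal I}^{\mathcal J}(\hat X)=\mathrm{tr}_{\mathcal N\setminus\mathcal I}[\hat X\hat O]$; equivalently $E_{\mathcal I}^{\mathcal J}(\hat X)=\mathrm{tr}_{\mathcal J}[\hat X\hat O_{\mathcal I\cup\mathcal J}]$ with $\hat O_{\mathcal I\cup\mathcal J}=\mathrm{tr}_{\mathcal N\setminus(\mathcal I\cup\mathcal J)}[\hat O]$. Definition ($(l,r)$-invertibility):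 for positive integers $l,r$ with $2\le l+r\le N-2$, $\hat O$ is called $(l,r)$-invertible if for every integer $k$ with $l\le k\le N-r-1$, $$\mathrm{rank}\bigl[E_{\{k-l+1,\dots,k\}}^{\{k+1,\dots,k+r\}}\bigr]=\mathrm{rank}\bigl[E_{\{1,\dots,k\}}^{\{k+1,\dots,N\}}\bigr].$$ *)

(* Defs.v *)
From HB Require Import structures.
From mathcomp Require Import all_boot all_order all_algebra.
Set Implicit Arguments. Unset Strict Implicit. Unset Printing Implicit Defensive.
Import Order.TTheory GRing.Theory Num.Theory.
Local Open Scope ring_scope.

(* Sites are numbered 1..N (as in the paper); the ordinal j : 'I_N encodes site j+1.
   A configuration assigns a basis state in 'I_d to each site.
   Operators on (C^d)^{(x)N} are square matrices indexed by configurations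
   (via the canonical enumeration of the finite type of configurations). *)
Section Defs.
Variables (C : numClosedFieldType) (N d : nat).

Definition cfg := {ffun 'I_N -> 'I_d}.
Definition dimH := #|{: cfg}|.
Definition op := 'M[C]_dimH.

Definition pairs : seq (cfg * cfg) := enum (predT : pred (cfg * cfg)%type).

Definition ent (A : op) (s t : cfg) : C := A (enum_rank s) (enum_rank t).
Definition mkop (f : cfg -> cfg -> C) : op :=
  \matrix_(i, j) f (enum_val i) (enum_val j).

Definition intv (a b : nat) : pred 'I_N := fun j => (a <= j.+1 <= b)%N.

Definition agree (P : pred 'I_N) (s t : cfg) : bool :=
  [forall j, P j ==> (s j == t j)].

(* matrix unit |s_I><t_I| on the sites I, tensored with the identity elsewhere *)
Definition eunit (I : pred 'I_N) (s t : cfg) : op :=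
  mkop (fun u v => ((agree I u s && agree I v t) && agree (predC I) u v)%:R).

(* V_I : operators acting on the sites I (identified with their tensor
   product with the identity on the remaining sites) *)
Definition Vsp (I : pred 'I_N) : {vspace op} :=
  <<[seq eunit I p.1 p.2 | p <- pairs]>>%VS.

(* partial trace over the sites S, the result (an operator on the complement)
   being identified with its tensor product with the identity on S *)
Definition ptr (S : pred 'I_N) (A : op) : op :=
  mkop (fun s t => (agree S s t)%:R *
     \sum_(u : cfg | agree (predC S) u s)
        ent A u [ffun j => if S j then u j else t j]).

Definition hs (A B : op) : C := \sum_i \sum_j (A i j)^* * B i j.

(* E_I^J (X) = tr_{N \ I}[X O]; the source set J only restricts the domain *)
Definition Emap (O : op) (I : pred 'I_N) (X : op) : op := ptr (predC I) (X *m O).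

Definition rankE (O : op) (I J : pred 'I_N) : nat :=
  \dim <<[seq Emap O I (eunit J p.1 p.2) | p <- pairs]>>%VS.

Definition lr_invertible (O : op) (l r : nat) : Prop :=
  forall k : nat, (l <= k <= N - r - 1)%N ->
    rankE O (intv (k - l + 1) k) (intv k.+1 (k + r)) =
    rankE O (intv 1 k) (intv k.+1 N).

(* F is the Moore--Penrose pseudoinverse of E_I^J : V_J -> V_I
   (Penrose conditions w.r.t. the Hilbert--Schmidt inner products; F is only
   constrained on V_I, which is its domain). *)
Definition is_pinv (O : op) (I J : pred 'I_N) (F : op -> op) : Prop :=
  [/\ forall Y, Y \in Vsp I -> F Y \in Vsp J &
      forall (a : C) Y Y', Y \in Vsp I -> Y' \in Vsp I ->
        F (a *: Y + Y') = a *: F Y + F Y'] /\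
  [/\ forall X, X \in Vsp J -> Emap O I (F (Emap O I X)) = Emap O I X,
      forall Y, Y \in Vsp I -> F (Emap O I (F Y)) = F Y,
      forall Y Y', Y \in Vsp I -> Y' \in Vsp I ->
        hs (Emap O I (F Y)) Y' = hs Y (Emap O I (F Y'))
    & forall X X', X \in Vsp J -> X' \in Vsp J ->
        hs (F (Emap O I X)) X' = hs X (F (Emap O I X'))].

End Defs.

Arguments intv N a b : clear implicits.
Arguments Vsp C N d I : clear implicits.

(* Main.v *)
Require Import Defs.
From HB Require Import structures.
From mathcomp Require Import all_boot all_order all_algebra.
From mathcomp Require Import zify.
Import Order.TTheory GRing.Theory Num.Theory.
Local Open Scope ring_scope.
Set Implicit Arguments. Unset Strict Implicit. Unset Printing Implicit Defensive.

Lemma rank_core (K : fieldType) (vT : vectType K) (G g : 'Hom(vT,vT)) (U W : {vspace vT}) :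
  (U <= W)%VS -> (forall X, X \in W -> G X = 0 -> g X = 0) ->
  \dim (g @: U) = \dim (G @: W) ->
  forall Z, Z \in W -> (exists2 W0, W0 \in U & g W0 = g Z) /\
     (forall Y, Y \in U -> g Y = g Z -> G Y = G Z).
Proof.
move=> sUW Hker Hdim Z ZW.
have kS : (W :&: lker G <= W :&: lker g)%VS.
  apply/subvP => x /memv_capP [xW]; rewrite !memv_ker => /eqP Gx.
  by apply/memv_capP; split=> //; rewrite memv_ker Hker.
have dG := limg_ker_dim G W; have dg := limg_ker_dim g W.
have dU := dimvS (limgS g sUW); have dk := dimvS kS.
have eU : (g @: U)%VS = (g @: W)%VS.
  apply/eqP; rewrite eqEdim limgS //=; lia.
have eK : (W :&: lker g)%VS = (W :&: lker G)%VS.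
  apply/eqP; rewrite eqEdim.
  have -> : (W :&: lker g <= W :&: lker G)%VS.
    have /eqP : (W :&: lker G)%VS == (W :&: lker g)%VS by rewrite eqEdim kS /=; lia.
    by move=> ->; exact: subvv.
  rewrite /=; lia.
split.
  have : g Z \in (g @: U)%VS by rewrite eU memv_img.
  by case/memv_imgP => W0 W0U ->; exists W0.
move=> Y YU gYZ.
have : Y - Z \in (W :&: lker G)%VS.
  rewrite -eK; apply/memv_capP; split; first by rewrite memvB // (subvP sUW).
  by rewrite memv_ker linearB /= gYZ subrr.
by case/memv_capP => _; rewrite memv_ker linearB /= subr_eq0 => /eqP.
Qed.

Section S.
Variables (C : numClosedFieldType) (N d : nat).
Local Notation cfg := (cfg N d).
Local Notation op := (op C N d).
Local Notation eu := (eunit C).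
Implicit Types (A B Q : op) (s t u v w : cfg) (I J K : pred 'I_N).

Lemma entE f s t : ent (mkop f : op) s t = f s t.
Proof. by rewrite /ent /mkop mxE !enum_rankK. Qed.

Lemma opP A B : (forall s t, ent A s t = ent B s t) -> A = B.
Proof. move=> H; apply/matrixP => i j; have := H (enum_val i) (enum_val j). by rewrite /ent !enum_valK. Qed.

Lemma sum_rank (F : 'I_(dimH N d) -> C) : \sum_i F i = \sum_s F (enum_rank s).
Proof.
rewrite (reindex (@enum_rank _)) //=. exists (@enum_val _ _) => x _; [exact: enum_rankK | exact: enum_valK].
Qed.

Lemma ent_mul A B s t : ent (A *m B) s t = \sum_w ent A s w * ent B w t.
Proof. by rewrite /ent mxE sum_rank. Qed.

Lemma ent_mulr A B s t : ent (A * B) s t = \sum_w ent A s w * ent B w t.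
Proof. exact: ent_mul. Qed.

Lemma tr_ent A : \tr A = \sum_s ent A s s.
Proof. by rewrite /mxtrace sum_rank. Qed.

Lemma entD A B s t : ent (A + B) s t = ent A s t + ent B s t.
Proof. by rewrite /ent mxE. Qed.
Lemma entZ a A s t : ent (a *: A) s t = a * ent A s t.
Proof. by rewrite /ent mxE. Qed.
Lemma ent0 s t : ent (0 : op) s t = 0.
Proof. by rewrite /ent mxE. Qed.

Lemma agreeP I s t : reflect (forall j, I j -> s j = t j) (agree I s t).
Proof.
apply: (iffP forallP) => H j; first by move=> Ij; move: (H j); rewrite Ij => /eqP.
by apply/implyP => /H ->.
Qed.

Lemma mulE A B : A * B = A *m B.
Proof. by []. Qed.

Lemma agree_trans I s t u : agree I s t -> agree I t u -> agree I s u.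
Proof. by move=> /agreeP H1 /agreeP H2; apply/agreeP => j Ij; rewrite H1 // H2. Qed.
Lemma agree_sym I s t : agree I s t = agree I t s.
Proof. by apply/agreeP/agreeP => H j Ij; rewrite H. Qed.
Lemma agree_eqr I s t u : agree I s t -> agree I s u = agree I t u.
Proof.
move=> H; apply/idP/idP => H2; last exact: agree_trans H H2.
by apply: agree_trans H2; rewrite agree_sym.
Qed.
Lemma agree_refl I s : agree I s s.
Proof. by apply/agreeP. Qed.
Lemma agree_ext I J s t : (forall j, I j = J j) -> agree I s t = agree J s t.
Proof. by move=> H; apply/agreeP/agreeP => H2 j; [rewrite -H|rewrite H]; apply: H2. Qed.
Lemma agree_sub I J s t : (forall j, J j -> I j) -> agree I s t -> agree J s t.
Proof. by move=> H /agreeP H2; apply/agreeP => j /H; apply: H2. Qed.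

Definition Pr I A : Prop :=
  (forall u v, ~~ agree (predC I) u v -> ent A u v = 0) /\
  (forall u v u' v', agree I u u' -> agree I v v' -> agree (predC I) u v ->
      agree (predC I) u' v' -> ent A u v = ent A u' v').

Lemma ent_eunit I s t u v : ent (eu I s t) u v =
  ((agree I u s && agree I v t) && agree (predC I) u v)%:R.
Proof. by rewrite /eunit entE. Qed.

Lemma Pr_eunit I s t : Pr I (eu I s t).
Proof.
split=> [u v H|u v u' v' H1 H2 H3 H4]; rewrite !ent_eunit.
  by rewrite (negbTE H) andbF.
by rewrite H3 H4 (agree_eqr _ H1) (agree_eqr _ H2).
Qed.

Lemma Pr0 I : Pr I 0.
Proof. by split=> *; rewrite !ent0. Qed.

Lemma PrD I a A B : Pr I A -> Pr I B -> Pr I (a *: A + B).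
Proof.
move=> [A1 A2] [B1 B2]; split=> [u v H|u v u' v' H1 H2 H3 H4]; rewrite !entD !entZ.
  by rewrite A1 // B1 // mulr0 addr0.
by rewrite (A2 u v u' v') // (B2 u v u' v').
Qed.

Lemma ent_sum (T : Type) (r : seq T) (P : pred T) (F : T -> op) s t :
  ent (\sum_(i <- r | P i) F i) s t = \sum_(i <- r | P i) ent (F i) s t.
Proof. by rewrite /ent summxE. Qed.

Lemma Vsp_Pr I A : A \in Vsp C N d I -> Pr I A.
Proof.
rewrite /Vsp => HA.
have := @coord_span _ _ _ (in_tuple [seq eu I p.1 p.2 | p <- pairs N d]) A HA.
move=> ->; apply: (big_ind (Pr I)); first exact: Pr0.
  by move=> x y Hx Hy; have := PrD 1 Hx Hy; rewrite scale1r.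
move=> i _; rewrite -[_ *: _]addr0; apply: PrD; last exact: Pr0.
have := mem_nth 0 (ltn_ord i); rewrite /= => /mapP [p _ ->]; exact: Pr_eunit.
Qed.

Lemma Pr_Vsp I A : Pr I A -> A \in Vsp C N d I.
Proof.
move=> [A1 A2].
case: (pickP (@predT cfg)) => [s0 _ | H0]; last first.
  have -> : A = 0 by apply: opP => s; have := H0 s.
  exact: mem0v.
pose canon x := [ffun j => if I j then x j else s0 j] : cfg.
pose c (p : cfg * cfg) := ((p.1 == canon p.1) && (p.2 == canon p.2))%:R * ent A p.1 p.2.
have -> : A = \sum_(p <- pairs N d) c p *: eu I p.1 p.2.
  apply: opP => u v; rewrite ent_sum /pairs big_enum /=.
  rewrite (bigD1 (canon u, canon v)) //= big1 ?addr0; last first.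
    move=> [p1 p2] /= Hp; rewrite entZ ent_eunit /c /=.
    case E1: (p1 == canon p1); case E2: (p2 == canon p2); rewrite ?mul0r //.
    case Ea: (agree I u p1); case Eb: (agree I v p2); rewrite /= ?mulr0 //.
    exfalso; move/negP: Hp; apply; apply/eqP; congr pair; apply/ffunP => j.
      rewrite (eqP E1) !ffunE; case Ij: (I j) => //; by move/agreeP: Ea => ->.
    rewrite (eqP E2) !ffunE; case Ij: (I j) => //; by move/agreeP: Eb => ->.
  have cc x : canon (canon x) = canon x by apply/ffunP => j; rewrite !ffunE; case: (I j).
  rewrite entZ ent_eunit /c /= !cc !eqxx mul1r.
  have ai x : agree I x (canon x) by apply/agreeP => j Ij; rewrite ffunE Ij.
  rewrite !ai /=.
  case E: (agree (predC I) u v); last by rewrite mulr0 A1 // E.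
  rewrite mulr1; apply: A2 => //; apply/agreeP => j /= Ij; rewrite !ffunE (negbTE Ij) //.
apply: memv_suml => p _; apply: memvZ; apply: memv_span; apply/mapP; exists p => //.
by rewrite /pairs mem_enum.
Qed.

Lemma collapse I J A B u v : (forall j, I j -> ~~ J j) -> Pr I A -> Pr J B ->
  ent (A * B) u v = ent A u [ffun j => if I j then v j else u j] *
                    ent B [ffun j => if I j then v j else u j] v.
Proof.
move=> dIJ [A1 _] [B1 _]; rewrite ent_mulr (bigD1 [ffun j => if I j then v j else u j]) //=.
rewrite big1 ?addr0 // => w Hw.
case Ea: (agree (predC I) u w); last by rewrite A1 ?mul0r // Ea.
case Eb: (agree (predC J) w v); last by rewrite (B1 w v) ?mulr0 // Eb.
exfalso; move/negP: Hw; apply; apply/eqP/ffunP => j; rewrite ffunE.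
case Ij: (I j); first by move/agreeP: Eb => -> //=; rewrite dIJ.
by move/agreeP: Ea => -> //=; rewrite Ij.
Qed.

Lemma Pr_mul I J A B : (forall j, I j -> ~~ J j) -> Pr I A -> Pr J B -> Pr (predU I J) (A * B).
Proof.
move=> dIJ HA HB; have [A1 A2] := HA; have [B1 B2] := HB.
split=> [u v H|u v u' v' H1 H2 H3 H4]; rewrite !(collapse _ _ dIJ HA HB).
  rewrite (B1 _ v) ?mulr0 //; apply: contra H => /agreeP H; apply/agreeP => j /=.
  rewrite negb_or => /andP [nI nJ]; have := H j nJ; by rewrite ffunE (negbTE nI).
move/agreeP: H1 => H1; move/agreeP: H2 => H2; move/agreeP: H3 => H3; move/agreeP: H4 => H4.
congr (_ * _).
  apply: A2; apply/agreeP => j /=.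
  - by move=> Ij; apply: H1; rewrite /= Ij.
  - by move=> Ij; rewrite !ffunE Ij; apply: H2; rewrite /= Ij.
  - by move=> Ij; rewrite ffunE (negbTE Ij).
  - by move=> Ij; rewrite ffunE (negbTE Ij).
apply: B2; apply/agreeP => j /=.
- by move=> Jj; rewrite !ffunE; case: (I j); [apply: H2|apply: H1]; rewrite /= Jj orbT.
- by move=> Jj; apply: H2; rewrite /= Jj orbT.
- move=> nJ; rewrite ffunE; case Ij: (I j) => //; apply: H3; by rewrite /= Ij (negbTE nJ).
- move=> nJ; rewrite ffunE; case Ij: (I j) => //; apply: H4; by rewrite /= Ij (negbTE nJ).
Qed.

Lemma Pr_sub I J A : (forall j, I j -> J j) -> Pr I A -> Pr J A.
Proof.
move=> sIJ [A1 A2]; split=> [u v H|u v u' v' H1 H2 H3 H4].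
  apply: A1; apply: contra H; apply: agree_sub => j /=; apply: contra; exact: sIJ.
case E: (agree (predC I) u v); last first.
  rewrite A1 ?E // A1 //; apply/negP => E'; move/negbT: E; apply/negP; apply/negPn.
  apply/agreeP => j /= nI; case Jj: (J j); last first.
    by move/agreeP: H3 -> => //=; rewrite Jj.
  move/agreeP: H1 -> => //; move/agreeP: H2 -> => //; by move/agreeP: E' ->.
apply: A2 => //.
- apply/agreeP => j Ij; move/agreeP: H1; apply; exact: sIJ.
- apply/agreeP => j Ij; move/agreeP: H2; apply; exact: sIJ.
apply/agreeP => j /= nI; case Jj: (J j); last first.
  by move/agreeP: H4 -> => //=; rewrite Jj.
move/agreeP: H1 <- => //; move/agreeP: H2 <- => //; by move/agreeP: E ->.
Qed.

Definition mix K (a y : cfg) : cfg := [ffun j => if K j then a j else y j].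

Lemma trE K a b Q : \tr (eu K a b * Q) =
  \sum_(y | agree K y b) ent Q y (mix K a y).
Proof.
rewrite tr_ent; under eq_bigr do rewrite ent_mulr.
rewrite exchange_big /= [RHS]big_mkcond /=; apply: eq_bigr => y _.
rewrite (bigD1 (mix K a y)) //= big1 ?addr0.
  rewrite ent_eunit; case: (agree K y b); rewrite ?andbF ?mul0r //=.
  have -> : agree K (mix K a y) a by apply/agreeP => j Kj; rewrite ffunE Kj.
  have -> : agree (predC K) (mix K a y) y by apply/agreeP => j /= Kj; rewrite ffunE (negbTE Kj).
  by rewrite mul1r.
move=> x Hx; rewrite ent_eunit.
case E1: (agree K x a); case E3: (agree (predC K) x y); rewrite ?andbF ?mul0r //=.
exfalso; move/negP: Hx; apply; apply/eqP/ffunP => j; rewrite ffunE.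
case Kj: (K j); [by move/agreeP: E1 ->| by move/agreeP: E3 -> => //=; rewrite Kj].
Qed.

Lemma ent_ptr S A s t : ent (ptr S A) s t = (agree S s t)%:R *
  \sum_(u | agree (predC S) u s) ent A u [ffun j => if S j then u j else t j].
Proof. by rewrite /ptr entE. Qed.

Lemma trE_ptr K t s Q : \tr (eu K t s * Q) = ent (ptr (predC K) Q) s (mix K t s).
Proof.
rewrite trE ent_ptr.
have -> : agree (predC K) s (mix K t s) by apply/agreeP => j /= Kj; rewrite ffunE (negbTE Kj).
rewrite mul1r; apply: eq_big => [u|u _].
  by rewrite /agree; apply: eq_forallb => j; rewrite /= negbK.
congr (ent Q u _); apply/ffunP => j; rewrite !ffunE /=; by case: (K j).
Qed.

Lemma Vsp_ind K (P : op -> Prop) : P 0 -> (forall a x y, P x -> P y -> P (a *: x + y)) ->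
  (forall s t, P (eu K s t)) -> forall A, A \in Vsp C N d K -> P A.
Proof.
move=> P0 PD Pe A HA.
have := @coord_span _ _ _ (in_tuple [seq eu K p.1 p.2 | p <- pairs N d]) A HA.
move=> ->; apply: (big_ind P); first exact: P0.
  by move=> x y Hx Hy; have := PD 1 _ _ Hx Hy; rewrite scale1r.
move=> i _; rewrite -[_ *: _]addr0; apply: PD; last exact: P0.
have := mem_nth 0 (ltn_ord i); rewrite /= => /mapP [p _ ->]; exact: Pe.
Qed.

Lemma ptr_eq K Q Q' : ptr (predC K) Q = ptr (predC K) Q' <->
  (forall M, M \in Vsp C N d K -> \tr (M * Q) = \tr (M * Q')).
Proof.
split=> [H|H].
  apply: Vsp_ind; first by rewrite !mul0r.
    move=> a x y Hx Hy; by rewrite !mulrDl !mxtraceD !mulE -!scalemxAl !mxtraceZ -!mulE Hx Hy.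
  by move=> s t; rewrite !trE_ptr H.
apply: opP => s t.
case E: (agree (predC K) s t); last by rewrite !ent_ptr E !mul0r.
have -> : t = mix K t s.
  by apply/ffunP => j; rewrite ffunE; case Kj: (K j) => //; move/agreeP: E -> => //=; rewrite Kj.
have Hm : eu K t s \in Vsp C N d K.
  by apply: memv_span; apply/mapP; exists (t, s) => //; rewrite /pairs mem_enum.
by rewrite -!trE_ptr H.
Qed.

Lemma Vsp_sub I J A : (forall j, I j -> J j) -> A \in Vsp C N d I -> A \in Vsp C N d J.
Proof. by move=> H /Vsp_Pr /(Pr_sub H) /Pr_Vsp. Qed.

Lemma Pr_ptr K Q : Pr K (ptr (predC K) Q).
Proof.
split=> [u v H|u v u' v' H1 H2 H3 H4]; rewrite !ent_ptr.
  by rewrite (negbTE H) mul0r.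
rewrite H3 H4; congr (_ * _); apply: eq_big => [y|y _].
  have e x z : agree (predC (predC K)) x z = agree K x z by rewrite /agree; apply: eq_forallb => j; rewrite /= negbK.
  rewrite !e.
  by rewrite [agree K y u]agree_sym [agree K y u']agree_sym (agree_eqr _ H1).
congr (ent Q y _); apply/ffunP => j; rewrite !ffunE /=.
by case Kj: (K j) => //=; move/agreeP: H2 ->.
Qed.

Lemma ptr_Vsp K Q : ptr (predC K) Q \in Vsp C N d K.
Proof. exact/Pr_Vsp/Pr_ptr. Qed.

Lemma ptr_lin S a A B : ptr S (a *: A + B) = a *: ptr S A + ptr S B.
Proof.
apply: opP => s t; rewrite entD entZ !ent_ptr.
under eq_bigr do rewrite entD entZ.
by rewrite big_split /= -mulr_sumr mulrDr mulrCA.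
Qed.

Definition Ef (O : op) I (X : op) : op := Emap O I X.
Lemma Ef_lin O I : linear (Ef O I).
Proof. by move=> a X Y; rewrite /Ef /Emap mulmxDl -scalemxAl ptr_lin. Qed.
HB.instance Definition _ O I := GRing.isLinear.Build C op op *:%R (Ef O I) (Ef_lin O I).
Definition Eh O I : 'Hom(op, op) := linfun (Ef O I).
Lemma EhE O I X : Eh O I X = Emap O I X.
Proof. by rewrite /Eh lfunE. Qed.

Lemma rankE_img O I J : rankE O I J = \dim (Eh O I @: Vsp C N d J)%VS.
Proof.
rewrite /rankE /Vsp limg_span.
have -> : [seq Eh O I i | i <- [seq eu J p.1 p.2 | p <- pairs N d]] =
   [seq Emap O I (eu J p.1 p.2) | p <- pairs N d].
  by rewrite -map_comp; apply: eq_map => p; rewrite /= EhE.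
by [].
Qed.

Lemma Pr1 I : Pr I 1.
Proof.
have e1 u v : ent (1 : op) u v = (u == v)%:R.
  by rewrite /ent mxE (inj_eq enum_rank_inj).
split=> [u v H|u v u' v' H1 H2 H3 H4]; rewrite !e1.
  case: eqP => // Huv; by rewrite Huv agree_refl in H.
have ag (x y : cfg) : agree (predC I) x y -> (x == y) = agree I x y.
  move=> Hxy; apply/eqP/idP => [->|H]; first exact: agree_refl.
  apply/ffunP => j; case Ij: (I j); [by move/agreeP: H ->| by move/agreeP: Hxy -> => //=; rewrite Ij].
rewrite (ag _ _ H3) (ag _ _ H4) (agree_eqr _ H1) agree_sym (agree_eqr _ H2) agree_sym //.
Qed.

Lemma mem1v_Vsp I : (1 : op) \in Vsp C N d I.
Proof. exact/Pr_Vsp/Pr1. Qed.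

Lemma Vsp_mul I J K A B : (forall j, I j -> ~~ J j) -> (forall j, I j || J j -> K j) ->
  A \in Vsp C N d I -> B \in Vsp C N d J -> A * B \in Vsp C N d K.
Proof.
move=> dIJ sK /Vsp_Pr HA /Vsp_Pr HB; apply: Pr_Vsp; apply: Pr_sub (Pr_mul dIJ HA HB).
by move=> j /= /sK.
Qed.

Lemma intv_sub a b c e j : (c <= a)%N -> (b <= e)%N -> intv N a b j -> intv N c e j.
Proof. rewrite /intv => H1 H2 /andP [H3 H4]; apply/andP; split; lia. Qed.

Lemma intv_disj a b c e j : (b < c)%N -> intv N a b j -> ~~ intv N c e j.
Proof. rewrite /intv => H1 /andP [H3 H4]; apply/negP => /andP [H5 H6]; lia. Qed.

Lemma prod_Vsp (X : nat -> op) a b : (forall i, (a <= i <= b)%N -> X i \in Vsp C N d (intv N i i)) ->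
  \prod_(a <= i < b.+1) X i \in Vsp C N d (intv N a b).
Proof.
elim: b => [|b IH] HX.
  case: a HX => [|a] HX; last by rewrite big_geq // mem1v_Vsp.
  by rewrite big_nat1; apply: HX.
case: (leqP a b.+1) => Hab; last first.
  by rewrite big_geq ?mem1v_Vsp // ltnW.
rewrite big_nat_recr //=.
apply: (@Vsp_mul (intv N a b) (intv N b.+1 b.+1)).
- by move=> j; apply: intv_disj.
- move=> j /orP [] /intv_sub; apply; lia.
- apply: IH => i /andP [H1 H2]; apply: HX; lia.
- apply: HX; lia.
Qed.

Lemma ptr0 S : ptr S (0 : op) = 0.
Proof. by apply: opP => s t; rewrite ent_ptr big1 ?mulr0 ?ent0 // => u _; rewrite ent0. Qed.

Lemma L1 (O : op) (l r : nat) (X Y : nat -> op) (F : nat -> op -> op) :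
  (0 < l)%N -> (0 < r)%N -> (l + r <= N - 2)%N -> lr_invertible O l r ->
  (forall i, (1 <= i <= N)%N -> X i \in Vsp C N d (intv N i i)) ->
  (forall k, (l + 1 <= k <= N - r)%N -> forall Z, Z \in Vsp C N d (intv N (k - l) (k - 1)) ->
      F k Z \in Vsp C N d (intv N k (k + r - 1))) ->
  (forall k, (l + 1 <= k <= N - r)%N -> forall Z, Z \in Vsp C N d (intv N k (k + r - 1)) ->
      Emap O (intv N (k - l) (k - 1)) (F k (Emap O (intv N (k - l) (k - 1)) Z)) =
      Emap O (intv N (k - l) (k - 1)) Z) ->
  Y (N - r)%N = \prod_((N - r).+1 <= i < N.+1) X i ->
  (forall k, (l + 1 <= k <= N - r)%N ->
     Y (k - 1)%N = F k (Emap O (intv N (k - l) (k - 1)) (X k * Y k))) ->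
  \tr ((\prod_(1 <= i < N.+1) X i) *m O) =
  \tr ((\prod_(1 <= i < l.+1) X i) * Y l *m O).
Proof.
move=> l0 r0 lrN Hinv HX HF1 HF2 HYN HY.
suff H : forall m, (m <= N - r - l)%N ->
   Y (N - r - m)%N \in Vsp C N d (intv N (N - r - m).+1 (N - r - m + r)) /\
   \tr ((\prod_(1 <= i < N.+1) X i) *m O) =
   \tr ((\prod_(1 <= i < (N - r - m).+1) X i) * Y (N - r - m)%N *m O).
  have [_] := H (N - r - l)%N (leqnn _).
  by have -> : (N - r - (N - r - l) = l)%N by lia.
elim=> [|m IH] Hm.
  rewrite subn0; split.
    rewrite HYN; have -> : (N - r + r = N)%N by lia.
    by apply: prod_Vsp => i Hi; apply: HX; lia.
  rewrite HYN (big_cat_nat (n := (N - r).+1)) //=; lia.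
have [YV Htr] := IH (ltnW Hm).
set k := (N - r - m)%N in YV Htr.
have Hk : (l + 1 <= k <= N - r)%N by rewrite /k; lia.
have -> : (N - r - m.+1 = k - 1)%N by rewrite /k; lia.
set I := intv N (k - l) (k - 1).
set Z := X k * Y k.
have ZV : Z \in Vsp C N d (intv N k N).
  apply: (@Vsp_mul (intv N k k) (intv N k.+1 (k + r))).
  - by move=> j; apply: intv_disj.
  - move=> j /orP [] /intv_sub; apply; rewrite /k; lia.
  - apply: HX; rewrite /k; lia.
  - exact: YV.
have sI : forall j, I j -> intv N 1 (k - 1) j by move=> j; apply: intv_sub; lia.
have e1 : (k - 1 - l + 1 = k - l)%N by lia.
have e2 : ((k - 1).+1 = k)%N by lia.
have e3 : (k - 1 + r = k + r - 1)%N by lia.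
have sUW : (Vsp C N d (intv N k (k + r - 1)) <= Vsp C N d (intv N k N))%VS.
  by apply/subvP => x; apply: Vsp_sub => j; apply: intv_sub; lia.
have Hker : forall W, W \in Vsp C N d (intv N k N) ->
    Eh O (intv N 1 (k - 1)) W = 0 -> Eh O I W = 0.
  move=> W _; rewrite !EhE /Emap => H0.
  rewrite -(ptr0 (predC I)); apply/ptr_eq => M MI.
  have : ptr (predC (intv N 1 (k - 1))) (W *m O) = ptr (predC (intv N 1 (k - 1))) 0 by rewrite ptr0.
  move/ptr_eq => H; apply: H; exact: Vsp_sub sI MI.
have Hdim : \dim (Eh O I @: Vsp C N d (intv N k (k + r - 1)))%VS =
            \dim (Eh O (intv N 1 (k - 1)) @: Vsp C N d (intv N k N))%VS.
  rewrite -!rankE_img; have := Hinv (k - 1)%N; rewrite e1 e2 e3; apply; lia.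
have [[W0 W0U gW0] Hc] := rank_core sUW Hker Hdim ZV.
rewrite !EhE in gW0.
have gZV : Emap O I Z \in Vsp C N d I by rewrite /Emap; exact: ptr_Vsp.
have Y'V : Y (k - 1)%N \in Vsp C N d (intv N k (k + r - 1)) by rewrite HY //; apply: HF1.
have gY' : Eh O I (Y (k - 1)%N) = Eh O I Z.
  by rewrite !EhE HY // -/Z -gW0 HF2.
have GY := Hc _ Y'V gY'; rewrite !EhE /Emap in GY.
split; first by rewrite e2 e3.
rewrite Htr e2 big_nat_recr /=; last by lia.
have MV : \prod_(1 <= i < (k - 1).+1) X i \in Vsp C N d (intv N 1 (k - 1)).
  by apply: prod_Vsp => i Hi; apply: HX; lia.
rewrite e2 in MV.
move/ptr_eq: GY => /(_ _ MV) H.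
rewrite -mulrA !mulE -!mulmxA. have -> : X k *m (Y k *m O) = Z *m O by rewrite /Z mulE mulmxA. exact: (esym H).
Qed.

Lemma eu_mul I J (a b : cfg) : (forall j, I j -> ~~ J j) -> eu I a b * eu J a b = eu (predU I J) a b.
Proof.
move=> dIJ; apply: opP => u v.
rewrite (collapse _ _ dIJ (Pr_eunit I a b) (Pr_eunit J a b)) !ent_eunit.
set w := [ffun j => _].
have E1 : agree I w b = agree I v b.
  by rewrite /agree; apply: eq_forallb => j; rewrite ffunE; case: (I j).
have E2 : agree (predC I) u w.
  by apply/agreeP => j /= nI; rewrite ffunE (negbTE nI).
have E3 : agree J w a = agree J u a.
  rewrite /agree; apply: eq_forallb => j; rewrite ffunE.
  by case Jj: (J j); case Ij: (I j) => //; have := dIJ j Ij; rewrite Jj.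
have E4 : agree (predC J) w v = agree (predC (predU I J)) u v.
  rewrite /agree; apply: eq_forallb => j; rewrite ffunE /=.
  by case: (I j); case: (J j); rewrite //= eqxx.
have aU (x y : cfg) : agree (predU I J) x y = agree I x y && agree J x y.
  apply/agreeP/andP => [H|[/agreeP H1 /agreeP H2] j /orP [/H1|/H2] //].
  by split; apply/agreeP => j Hj; apply: H; rewrite /= Hj ?orbT.
rewrite E1 E2 E3 E4 !aU.
by case: (agree I u a); case: (agree I v b); case: (agree J u a); case: (agree J v b);
   case: (agree (predC (predU I J)) u v); rewrite /= ?mulr0 ?mul0r ?mulr1.
Qed.

Lemma eu_ext I J (a b : cfg) : (forall j, I j = J j) -> eu I a b = eu J a b.
Proof.
move=> H; apply: opP => u v; rewrite !ent_eunit.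
have e1 (x y : cfg) : agree I x y = agree J x y by apply: agree_ext.
have e2 (x y : cfg) : agree (predC I) x y = agree (predC J) x y by apply: agree_ext => j /=; rewrite H.
by rewrite !e1 e2.
Qed.

Lemma prod_eu (a b : cfg) m : \prod_(1 <= i < m.+1) eu (intv N i i) a b = eu (intv N 1 m) a b.
Proof.
elim: m => [|m IH].
  rewrite big_geq //; apply: opP => u v; rewrite ent_eunit /ent mxE (inj_eq enum_rank_inj).
  have e (x y : cfg) : agree (intv N 1 0) x y by apply/agreeP => j; rewrite /intv; lia.
  rewrite !e /=; have -> // : agree (predC (intv N 1 0)) u v = (u == v).
  apply/idP/eqP => [H|->]; last exact: agree_refl.
  by apply/ffunP => j; move/agreeP: H; apply; rewrite /= /intv; lia.

rewrite big_nat_recr //= IH eu_mul; last by move=> j; apply: intv_disj.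
apply: eu_ext => j /=; rewrite /intv; apply/orP/idP => [[]|H]; try lia.
Qed.

Lemma tr_full (a b : cfg) Q : \tr (eu (intv N 1 N) a b * Q) = ent Q b a.
Proof.
rewrite trE (big_pred1 b) => [|y].
  congr (ent Q b _); apply/ffunP => j; rewrite ffunE.
  by have -> : intv N 1 N j by rewrite /intv; have := ltn_ord j; lia.
apply/agreeP/eqP => [H|->]; last by [].
by apply/ffunP => j; apply: H; rewrite /intv; have := ltn_ord j; lia.
Qed.

Lemma eu_Vsp I s t : eu I s t \in Vsp C N d I.
Proof. by apply: memv_span; apply/mapP; exists (s, t) => //; rewrite /pairs mem_enum. Qed.

Definition Fgi (O : op) I (U : {vspace op}) (Y : op) : op :=
  projv U (((Eh O I \o projv U)^-1)%VF Y).

Lemma Fgi2 (O : op) I (U : {vspace op}) (Z : op) : Z \in U -> Emap O I (Fgi O I U (Emap O I Z)) = Emap O I Z.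
Proof.
move=> ZU.
have hZ : (Eh O I \o projv U)%VF Z = Emap O I Z by rewrite comp_lfunE projv_id // EhE.
have key y : Eh O I (projv U y) = (Eh O I \o projv U)%VF y by rewrite comp_lfunE.
rewrite /Fgi -EhE key -hZ limg_lfunVK //.
exact: memv_img (memvf _).
Qed.

Theorem main (l r : nat) (O : op) :
  (4 <= N)%N -> (0 < l)%N -> (0 < r)%N -> (2 <= l + r <= N - 2)%N ->
  lr_invertible O l r ->
  (forall (X : nat -> op) (Y : nat -> op)
          (Ebar : nat -> op -> op),
     (forall i, (1 <= i <= N)%N -> X i \in Vsp C N d (intv N i i)) ->
     (forall k, (l + 1 <= k <= N - r)%N ->
        is_pinv O (intv N (k - l) (k - 1)) (intv N k (k + r - 1)) (Ebar k)) ->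
     Y (N - r)%N = \prod_((N - r).+1 <= i < N.+1) X i ->
     (forall k, (l + 1 <= k <= N - r)%N ->
        Y (k - 1)%N = Ebar k (Emap O (intv N (k - l) (k - 1)) (X k * Y k))) ->
     \tr ((\prod_(1 <= i < N.+1) X i) *m O) =
     \tr ((\prod_(1 <= i < l.+1) X i) * Y l *m O))
  /\
  (forall O' : op, lr_invertible O' l r ->
     (forall k, (1 <= k <= N - (l + r + 1) + 1)%N ->
        ptr (predC (intv N k (k + (l + r + 1) - 1))) O' =
        ptr (predC (intv N k (k + (l + r + 1) - 1))) O) ->
     O' = O).
Proof.
move=> N4 l0 r0 /andP [lr2 lrN] Hinv; split.
  move=> X Y Ebar HX HE HYN HY; apply: (L1 (r := r) (F := Ebar)) => //.
    by move=> k Hk Z HZ; have [[H1 _] _] := HE k Hk; exact: H1.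
  by move=> k Hk Z HZ; have [_ [H _ _ _]] := HE k Hk; exact: H.
move=> O' Hinv' Hblk.
pose I k := intv N (k - l) (k - 1); pose J k := intv N k (k + r - 1).
pose F k := Fgi O (I k) (Vsp C N d (J k)).
have EO : forall k, (l + 1 <= k <= N - r)%N -> forall Z, Z \in Vsp C N d (intv N k (k + r)) ->
    Emap O' (I k) Z = Emap O (I k) Z.
  move=> k Hk Z HZ; rewrite /Emap; apply/ptr_eq => M MI.
  have Hr : (1 <= k - l <= N - (l + r + 1) + 1)%N by lia.
  have := Hblk _ Hr; have -> : (k - l + (l + r + 1) - 1 = k + r)%N by lia.
  move=> /ptr_eq Hb.
  have MZ : M * Z \in Vsp C N d (intv N (k - l) (k + r)).
    apply: (Vsp_mul _ _ MI HZ).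
    - by move=> j; apply: intv_disj; lia.
    - move=> j /orP [] /intv_sub; apply; lia.
  have := Hb _ MZ.
  by rewrite !mulE !mulmxA.
have HF1 : forall k, (l + 1 <= k <= N - r)%N -> forall Z, Z \in Vsp C N d (I k) ->
    F k Z \in Vsp C N d (intv N k (k + r - 1)) by move=> k _ Z _; exact: memv_proj.
have HF2 : forall k, (l + 1 <= k <= N - r)%N -> forall Z, Z \in Vsp C N d (intv N k (k + r - 1)) ->
    Emap O (I k) (F k (Emap O (I k) Z)) = Emap O (I k) Z by move=> k _ Z HZ; exact: Fgi2.
have sJ : forall k Z, Z \in Vsp C N d (intv N k (k + r - 1)) -> Z \in Vsp C N d (intv N k (k + r)).
  by move=> k Z; apply: Vsp_sub => j; apply: intv_sub; lia.
apply: opP => b a.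
pose X i := eu (intv N i i) a b.
pose Ys := fix Ys m := match m with
   | 0 => \prod_((N - r).+1 <= i < N.+1) X i
   | m'.+1 => F (N - r - m')%N (Emap O (I (N - r - m')%N) (X (N - r - m')%N * Ys m')) end.
pose Y k := Ys (N - r - k)%N.
have HX : forall i, (1 <= i <= N)%N -> X i \in Vsp C N d (intv N i i) by move=> i _; exact: eu_Vsp.
have HYN : Y (N - r)%N = \prod_((N - r).+1 <= i < N.+1) X i by rewrite /Y subnn.
have HY : forall k, (l + 1 <= k <= N - r)%N ->
    Y (k - 1)%N = F k (Emap O (I k) (X k * Y k)).
  move=> k Hk; rewrite /Y; have -> : (N - r - (k - 1) = (N - r - k).+1)%N by lia.
  rewrite [Ys _.+1]/=.
  by rewrite (_ : (N - r - (N - r - k) = k)%N) //; lia.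
have YV : forall k, (l <= k <= N - r)%N -> Y k \in Vsp C N d (intv N k.+1 (k + r)).
  move=> k Hk; case: (ltnP k (N - r)) => Hk2.
    have Hk1 : (l + 1 <= k.+1 <= N - r)%N by lia.
    have := HY _ Hk1; rewrite (_ : (k.+1 - 1 = k)%N) ?subn1 // => ->.
    rewrite (_ : (k + r = k.+1 + r - 1)%N); last by lia.
    by apply: HF1 => //; rewrite /Emap; exact: ptr_Vsp.
  have -> : k = (N - r)%N by lia.
  rewrite HYN (_ : (N - r + r = N)%N); last by lia.
  by apply: prod_Vsp => i Hi; apply: HX; lia.
have XYV : forall k, (l + 1 <= k <= N - r)%N -> X k * Y k \in Vsp C N d (intv N k (k + r)).
  move=> k Hk; apply: (@Vsp_mul (intv N k k) (intv N k.+1 (k + r))).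
  - by move=> j; apply: intv_disj.
  - move=> j /orP [] /intv_sub; apply; lia.
  - exact: eu_Vsp.
  - apply: YV; lia.
have T1 := L1 (r := r) l0 r0 lrN Hinv HX HF1 HF2 HYN HY.
have T2 : \tr ((\prod_(1 <= i < N.+1) X i) *m O') =
          \tr ((\prod_(1 <= i < l.+1) X i) * Y l *m O').
  apply: (L1 (r := r) (F := F) l0 r0 lrN Hinv' HX HF1 _ HYN).
    move=> k Hk Z HZ.
    have FV : F k (Emap O (I k) Z) \in Vsp C N d (intv N k (k + r - 1)).
      by apply: HF1 => //; exact: ptr_Vsp.
    rewrite (EO k Hk Z (sJ _ _ HZ)) (EO k Hk _ (sJ _ _ FV)); exact: HF2.
  by move=> k Hk; rewrite (EO k Hk _ (XYV k Hk)); exact: HY.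
have T3 : \tr ((\prod_(1 <= i < l.+1) X i) * Y l *m O) =
          \tr ((\prod_(1 <= i < l.+1) X i) * Y l *m O').
  have Hr : (1 <= 1 <= N - (l + r + 1) + 1)%N by lia.
  have := Hblk _ Hr; rewrite (_ : (1 + (l + r + 1) - 1 = l + r + 1)%N); last by lia.
  move=> /ptr_eq Hb; apply: esym; apply: Hb.
  apply: (@Vsp_mul (intv N 1 l) (intv N l.+1 (l + r))).
  - by move=> j; apply: intv_disj.
  - move=> j /orP [] H; apply: (intv_sub _ _ H); lia.
  - by apply: prod_Vsp => i Hi; apply: HX; lia.
  - apply: YV; lia.
rewrite -!tr_full -(prod_eu a b N).
by rewrite [LHS]T2 -T3 -T1.
Qed.
End S.

Theorem theorem1 (C : numClosedFieldType) (N d l r : nat) (O : op C N d) :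
  (4 <= N)%N -> (0 < l)%N -> (0 < r)%N -> (2 <= l + r <= N - 2)%N ->
  lr_invertible O l r ->
  (forall (X : nat -> op C N d) (Y : nat -> op C N d)
          (Ebar : nat -> op C N d -> op C N d),
     (forall i, (1 <= i <= N)%N -> X i \in Vsp C N d (intv N i i)) ->
     (forall k, (l + 1 <= k <= N - r)%N ->
        is_pinv O (intv N (k - l) (k - 1)) (intv N k (k + r - 1)) (Ebar k)) ->
     Y (N - r)%N = \prod_((N - r).+1 <= i < N.+1) X i ->
     (forall k, (l + 1 <= k <= N - r)%N ->
        Y (k - 1)%N = Ebar k (Emap O (intv N (k - l) (k - 1)) (X k * Y k))) ->
     \tr ((\prod_(1 <= i < N.+1) X i) *m O) =
     \tr ((\prod_(1 <= i < l.+1) X i) * Y l *m O))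
  /\
  (forall O' : op C N d, lr_invertible O' l r ->
     (forall k, (1 <= k <= N - (l + r + 1) + 1)%N ->
        ptr (predC (intv N k (k + (l + r + 1) - 1))) O' =
        ptr (predC (intv N k (k + (l + r + 1) - 1))) O) ->
     O' = O).
Proof. exact: main. Qed.
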